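(* Let $G$ be a finite group and $p$ a prime number, and let $r=\max\{d((G/p(G))^{\mathrm{ab}}),1\}$. Then there exist subgroups $Q_1,\dots,Q_r$ of $G$, each of which is cyclic-by-$p$, such that $G$ is generated by the union of the conjugacy classes $Q_1^G\cup\dots\cup Q_r^G$, where $Q_i^G=\{gxg^{-1}: g\in G, x\in Q_i\}$.
   Context: $d(H)$ is the minimal number of generators of a finite group $H$, $H^{\mathrm{ab}}$ its abelianization, and $p(H)$ the subgroup generated by the $p$-Sylow subgroups of $H$. A group $Q$ is cyclic-by-$p$ if it has a normal $p$-subgroup $P$ with $Q/P$ cyclic. *)

(* Defs.v *)
From mathcomp Require Import all_boot fingroup morphism quotient perm automorphism commutator cyclic pgroup sylow.
Set Implicit Arguments. Unset Strict Implicit. Unset Printing Implicit Defensive.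
Local Open Scope group_scope.

Definition pSylGen (gT : finGroupType) (p : nat) (H : {set gT}) : {set gT} :=
  <<\bigcup_(P in 'Syl_p(H)) P>>.

Definition generates (gT : finGroupType) (H : {set gT}) (s : seq gT) : bool :=
  all (fun x => x \in H) s && (<<[set x in s]>> == H).

Definition has_gen_of_size (gT : finGroupType) (H : {set gT}) (n : nat) : bool :=
  [exists t : n.-tuple gT, generates H t].

Lemma generates_exists (gT : finGroupType) (H : {group gT}) :
  exists n, has_gen_of_size H n.
Proof.
exists (size (enum H)); apply/existsP; exists (in_tuple (enum H)).
rewrite /generates /=.
apply/andP; split; first by apply/allP => x; rewrite mem_enum.
rewrite eqEsubset; apply/andP; split.
  by rewrite gen_subG; apply/subsetP => x; rewrite inE mem_enum.
by rewrite -{1}(genGid H) genS //; apply/subsetP => x; rewrite inE mem_enum.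
Qed.

Definition dgen (gT : finGroupType) (H : {group gT}) : nat :=
  ex_minn (generates_exists H).

Definition abelianization (gT : finGroupType) (H : {group gT}) :=
  (H / H^`(1))%G.

Definition cyclic_by_p (gT : finGroupType) (p : nat) (Q : {group gT}) : Prop :=
  exists P : {group gT}, [/\ P <| Q, p.-group P & cyclic (Q / P)].

Definition conj_closure (gT : finGroupType) (Q G : {set gT}) : {set gT} :=
  \bigcup_(g in G) (Q :^ g).

(* Main.v *)
Require Import Defs.
From mathcomp Require Import all_boot fingroup morphism quotient perm automorphism commutator cyclic pgroup sylow.
From mathcomp Require Import zify.
Set Implicit Arguments. Unset Strict Implicit. Unset Printing Implicit Defensive.
Local Open Scope group_scope.

Section Core.
Variable gT : finGroupType.
Implicit Types K L M A B : {group gT}.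

Lemma ncl_normal (G K : {group gT}) (S : {set gT}) :
  K <| G -> S \subset G -> <<K :|: class_support S G>> <| G.
Proof.
move=> nKG sSG; apply/andP; split.
  by rewrite gen_subG subUset normal_sub // class_support_subG.
by apply: norms_gen; apply: normsU; [exact: normal_norm | exact: class_support_norm].
Qed.

Lemma nonab_contra (G K M A A' : {group gT}) m :
  K <| G -> M <| G -> A <| G -> A' <| G ->
  (forall L : {group gT}, L <| G -> K \subset L -> L \subset M -> L :=: K \/ L :=: M) ->
  K \subset A -> K \subset A' -> K \subset M ->
  ~~ (M \subset A) -> ~~ (M \subset A') -> ~~ (M^`(1) \subset K) ->
  m \in M -> m \notin K -> m \in A * A' -> False.
Proof.
move=> nKG nMG nAG nA'G minM sKA sKA' sKM nMA nMA' nM'K Mm nKm mAA'.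
have IK : forall B : {group gT}, B <| G -> K \subset B -> ~~ (M \subset B) -> B :&: M :=: K.
  move=> B nBG sKB nMB.
  have sKBM : K \subset B :&: M by rewrite subsetI sKB.
  have [//|eBM] := minM [group of B :&: M] (normalI nBG nMG) sKBM (subsetIr _ _).
  by case/negP: nMB; rewrite -eBM subsetIl.
have AM := IK A nAG sKA nMA; have A'M := IK A' nA'G sKA' nMA'.
have nAA' : A' \subset 'N(A) by rewrite (subset_trans (normal_sub nA'G)) ?normal_norm.
have defJ : A <*> A' = A * A' by rewrite norm_joinEr.
have nJG : (A <*> A')%G <| G by apply: normalY.
have sKJ : K \subset (A <*> A') :&: M by rewrite subsetI sKM (subset_trans sKA (joing_subl _ _)).
have [eB|eB] := minM [group of (A <*> A') :&: M] (normalI nJG nMG) sKJ (subsetIr _ _).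
  by case/negP: nKm; rewrite -eB inE /= defJ mAA' Mm.
have sMJ : M \subset A * A' by rewrite -defJ -eB subsetIl.
have nn : forall X Y : {group gT}, X <| G -> Y <| G -> X \subset 'N(Y).
  by move=> X Y nXG nYG; rewrite (subset_trans (normal_sub nXG)) ?normal_norm.
have cAM : [~: A, M] \subset K.
  by rewrite -AM commg_subI // subsetI ?subxx /= nn.
have cA'M : [~: A', M] \subset K.
  by rewrite -A'M commg_subI // subsetI ?subxx /= nn.
case/negP: nM'K; rewrite derg1 (subset_trans (commSg _ sMJ)) //.
rewrite commMG; first by rewrite mul_subG.
by apply: normsR; apply: nn.
Qed.

Lemma Xsub r (G : {group gT}) (x : 'I_r -> gT) :
  (forall i, x i \in G) -> [set x i | i : 'I_r] \subset G.
Proof. by move=> Gx; apply/subsetP=> _ /imsetP[i _ ->]. Qed.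

Lemma core r (G : {group gT}) (g : 'I_r -> gT) : 0 < r -> (forall i, g i \in G) ->
  forall K : {group gT}, K <| G ->
  G \subset <<(G^`(1) :|: K) :|: [set g i | i : 'I_r]>> ->
  exists x : 'I_r -> gT, (forall i, x i \in G) /\
    G \subset <<K :|: class_support [set x i | i : 'I_r] G>>.
Proof.
move=> r0 Gg K.
move: {2}(#|G| - #|K|).+1 (ltnSn (#|G| - #|K|)) => n.
elim: n K => // n IH K ltn nKG sGg.
have [sG'K | nsG'K] := boolP (G^`(1) \subset K).
  exists g; split=> //; apply: (subset_trans sGg); apply: genS.
  rewrite !subUset subsetUl andbT; apply/andP; split.
    by apply: subset_trans sG'K _; apply: subsetUl.
  by apply: subset_trans (sub_class_support _ _) _; apply: subsetUr.
pose D := (G^`(1) <*> K)%G.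
pose gP := fun L : {group gT} => [&& L <| G, K \proper L & L \subset D].
have nDG : D <| G by apply: normalY => //; apply: der_normal.
have gPD : gP D.
  rewrite /gP nDG subxx andbT properE joing_subr /=.
  by apply: contra nsG'K => h; apply: subset_trans h; apply: joing_subl.
have [M minM sMD] := mingroup_exists gPD.
have /and3P[nMG pKM _] := mingroupp minM.
have sKM := proper_sub pKM.
have minL : forall L : {group gT}, L <| G -> K \subset L -> L \subset M -> L :=: K \/ L :=: M.
  move=> L nLG sKL sLM; have [pKL|npKL] := boolP (K \proper L).
    right; case/mingroupP: minM => _ ->; rewrite // /gP nLG pKL.
    exact: subset_trans sMD.
  by left; apply/eqP; rewrite eqEsubset sKL andbT; move: npKL; rewrite properE sKL negbK.
have ltM : #|G| - #|M| < n.
  have H : forall a b c k, b < c -> c <= a -> a - b < k.+1 -> a - c < k by move=> *; lia.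
  exact: H (proper_card pKM) (subset_leq_card (normal_sub nMG)) ltn.
have sGgM : G \subset <<(G^`(1) :|: M) :|: [set g i | i : 'I_r]>>.
  apply: (subset_trans sGg); apply: genS; apply: setSU; apply: setUS; exact: sKM.
have [x [Gx sGx]] := IH M ltM nMG sGgM.
have memX : forall (y : 'I_r -> gT) i,
    y i \in <<K :|: class_support [set y j | j : 'I_r] G>>.
  move=> y i; apply: mem_gen; rewrite inE; apply/orP; right.
  by apply: (subsetP (sub_class_support _ _)); apply: imset_f.
have sKX : forall (y : 'I_r -> gT), K \subset <<K :|: class_support [set y j | j : 'I_r] G>>.
  by move=> y; apply: subset_trans (subset_gen _); apply: subsetUl.
pose A := (<<K :|: class_support [set x i | i : 'I_r] G>>)%G.
have nA : A <| G by apply: ncl_normal => //; apply: Xsub.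
have nn : forall X Y : {group gT}, X <| G -> Y <| G -> X \subset 'N(Y).
  by move=> X Y nXG nYG; rewrite (subset_trans (normal_sub nXG)) ?normal_norm.
have [sMA | nsMA] := boolP (M \subset A).
  exists x; split=> //; apply: subset_trans sGx _.
  rewrite gen_subG subUset sMA /=; apply: subset_trans (subset_gen _); apply: subsetUr.
have [sM'K | nsM'K] := boolP (M^`(1) \subset K).
  exfalso; move/negP: nsMA; apply.
  have sG'A : G^`(1) \subset A.
    apply: der1_min (normal_norm nA) _.
    have sGAM : G \subset A <*> M.
      apply: subset_trans sGx _; rewrite gen_subG subUset joing_subr /=.
      apply: subset_trans (joing_subl A M).
      by apply: subset_trans (subset_gen _); apply: subsetUr.
    apply: abelianS (quotientS _ sGAM) _.
    rewrite quotientYidl ?nn //; apply: sub_der1_abelian.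
    exact: subset_trans sM'K (sKX x).
  by apply: subset_trans sMD _; rewrite join_subG sG'A sKX.
have [_ [m Mm nKm]] := properP pKM.
pose i0 := Ordinal r0.
pose x' := fun i => if i == i0 then x i * m else x i.
have Gx' : forall i, x' i \in G.
  by move=> i; rewrite /x'; case: eqP => _; rewrite ?groupM // (subsetP (normal_sub nMG)).
pose A' := (<<K :|: class_support [set x' i | i : 'I_r] G>>)%G.
have nA' : A' <| G by apply: ncl_normal => //; apply: Xsub.
have [sMA' | nsMA'] := boolP (M \subset A').
  exists x'; split=> //; apply: subset_trans sGx _.
  rewrite gen_subG subUset sMA' /=.
  apply: class_support_sub_norm; last exact: normal_norm nA'.
  apply/subsetP=> _ /imsetP[i _ ->].
  have := memX x' i; rewrite /x'; case: eqP => // _ h.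
  by rewrite -(mulgK m (x i)) groupM ?groupV // (subsetP sMA').
exfalso; apply: (nonab_contra nKG nMG nA nA' minL (sKX x) (sKX x') sKM nsMA nsMA' nsM'K Mm nKm).
have h1 := memX x i0; have h2 := memX x' i0.
rewrite /x' eqxx in h2.
by rewrite -(mulKg (x i0) m) mem_mulg // groupV.
Qed.

Lemma pSylGen_normal (G : {group gT}) p : pSylGen p G <| G.
Proof.
apply/andP; split.
  rewrite /pSylGen gen_subG; apply/bigcupsP => P; rewrite inE => /pHall_sub //.
rewrite /pSylGen; apply: norms_gen; apply/subsetP => y Gy; rewrite inE.
apply/subsetP => _ /imsetP[z Uz ->].
case/bigcupP: Uz => P SylP Pz; apply/bigcupP; exists (P :^ y)%G.
  by rewrite inE /= pHallJ //; move: SylP; rewrite inE.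
by rewrite memJ_conjg.
Qed.

Lemma lift_gens (G K : {group gT}) r (t : seq (coset_of ((G / K)^`(1)))) :
  K <| G -> size t <= r ->
  <<[set c in t]>> = (G / K) / (G / K)^`(1) ->
  let g := fun i : 'I_r => odflt 1 [pick y in G | coset ((G / K)^`(1)) (coset K y) == nth 1 t i] in
  (forall i, g i \in G) /\ G \subset <<(G^`(1) :|: K) :|: [set g i | i : 'I_r]>>.
Proof.
move=> nKG szt eT g.
have Gg : forall i, g i \in G.
  by move=> i; rewrite /g; case: pickP => [y /andP[Gy _]|_] //=; apply: group1.
split=> //.
set W := <<(G^`(1) :|: K) :|: [set g i | i : 'I_r]>>.
have sKW : K \subset W by rewrite (subset_trans _ (subset_gen _)) // -setUA subsetU // subsetUl orbT.
have sG'W : G^`(1) \subset W by rewrite (subset_trans _ (subset_gen _)) // -setUA subsetUl.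
have sWG : W \subset G.
  by rewrite gen_subG !subUset der_sub (normal_sub nKG) (Xsub Gg).
have nKG' := normal_norm nKG.
rewrite -(quotientSGK nKG' sKW).
have nH'H : G / K \subset 'N((G / K)^`(1)) by apply: normal_norm; apply: der_normal.
have sH'W : (G / K)^`(1) \subset W / K by rewrite -quotient_der // quotientS.
rewrite -(quotientSGK nH'H sH'W) -eT gen_subG.
apply/subsetP => c; rewrite inE => ct.
have ir : index c t < r by apply: leq_trans szt; rewrite index_mem.
pose i := Ordinal ir.
have ci : nth 1 t i = c by rewrite nth_index.
have : c \in (G / K) / (G / K)^`(1) by rewrite -eT mem_gen // inE.
case/morphimP => h _ /morphimP[y _ Gy eh] ec.
have ec' : c = coset ((G / K)^`(1)) (coset K y) by rewrite ec eh.
have : [pick y in G | coset ((G / K)^`(1)) (coset K y) == nth 1 t i] != None.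
  by case: pickP => // /(_ y) /=; rewrite Gy ci ec' eqxx.
have Wgi : g i \in W by apply: mem_gen; rewrite inE; apply/orP; right; apply: imset_f.
move: Wgi; rewrite /g; case: pickP => // z /andP[Gz /eqP ez] Wz _.
rewrite -ci -ez; apply: mem_quotient; apply: mem_quotient => //.
Qed.

End Core.

Unset Implicit Arguments.
Set Strict Implicit.
Theorem mainTheorem5 (gT : finGroupType) (G : {group gT}) (p : nat) :
  prime p ->
  let r := maxn (dgen (abelianization (G / pSylGen p G)%G)) 1 in
  exists Q : 'I_r -> {group gT},
    (forall i, Q i \subset G /\ cyclic_by_p p (Q i)) /\
    G :=: <<\bigcup_(i < r) conj_closure (Q i) G>>.
Proof.
move=> pr r.
pose K := [group of pSylGen p G].
have nKG : K <| G := pSylGen_normal G p.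
have r0 : 0 < r by rewrite /r leq_maxr.
have : has_gen_of_size (abelianization (G / pSylGen p G)%G) (dgen (abelianization (G / pSylGen p G)%G)).
  by rewrite /dgen; case: ex_minnP.
case/existsP => t /andP[_ /eqP eT].
have szt : size t <= r by rewrite size_tuple /r leq_maxl.
have [Ggg sGg] := lift_gens nKG szt eT.
have [x [Gx sGx]] := core r0 Ggg nKG sGg.
have [P sylP] := Sylow_exists p G.
have sPK : P \subset K.
  rewrite /= /pSylGen sub_gen //; apply: (bigcup_sup P); rewrite inE.
  exact: sylP.
have sylPK : p.-Sylow(K) P := pHall_subl sPK (normal_sub nKG) sylP.
have eF : K * 'N_G(P) = G := Frattini_arg nKG sylPK.
pose y := fun i => odflt 1 [pick z in 'N_G(P) | x i * z^-1 \in K].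
have yP : forall i, y i \in 'N_G(P) /\ x i * (y i)^-1 \in K.
  move=> i; rewrite /y; case: pickP => [z /andP[]|] //.
  move=> none; exfalso.
  have : x i \in K * 'N_G(P) by rewrite eF.
  case/mulsgP => k z Kk Nz exi.
  by have := none z; rewrite /= Nz exi mulgK Kk.
pose Q := fun i => (P <*> <[y i]>)%G.
have sQG : forall i, Q i \subset G.
  move=> i; have [/setIP[Gy _] _] := yP i.
  by rewrite join_subG (pHall_sub sylP) cycle_subG Gy.
exists Q; split.
  move=> i; split => //; have [/setIP[Gy Ny] _] := yP i.
  exists P; split.
  - by rewrite /normal joing_subl join_subG normG cycle_subG Ny.
  - exact: pHall_pgroup sylP.
  - by rewrite /Q /= quotientYidl ?cycle_subG // quotient_cyclic ?cycle_cyclic.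
set W := <<\bigcup_(i < r) conj_closure (Q i) G>>.
have sQW : forall i g, g \in G -> Q i :^ g \subset W.
  move=> i g Gg; apply: subset_trans (subset_gen _).
  apply: (subset_trans _ (bigcup_sup i _)) => //; rewrite /conj_closure.
  exact: (bigcup_sup g Gg).
apply/eqP; rewrite eqEsubset; apply/andP; split; last first.
  rewrite gen_subG; apply/bigcupsP => i _; apply/bigcupsP => g Gg.
  by rewrite -(conjGid Gg) conjSg.
have sKW : K \subset W.
  rewrite /= /pSylGen gen_subG; apply/bigcupsP => P' sylP'; rewrite inE in sylP'.
  have [g Gg eP'] := Sylow_trans sylP sylP'.
  rewrite eP'; apply: subset_trans (sQW (Ordinal r0) g Gg).
  by rewrite conjSg joing_subl.
apply: subset_trans sGx _; rewrite gen_subG subUset sKW /=.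
apply/subsetP => _ /imset2P[_ z /imsetP[i _ ->] Gz ->].
have [/setIP[Gy Ny] Kk] := yP i.
rewrite -(mulgKV (y i) (x i)) conjMg groupM //.
  by apply: (subsetP sKW); rewrite memJ_norm // (subsetP (normal_norm nKG)).
apply: (subsetP (sQW i z Gz)); rewrite memJ_conjg.
exact: (subsetP (joing_subr P <[y i]>)) (cycle_id _).
Qed.
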